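(* If $G$ is a fullerene, then $\mathrm{GP}(G)$ is an integer.
   Context: All graphs are simple and finite. For a connected graph $G$, $d_G(u,v)$ denotes the shortest-path distance and $\mathrm{Aut}(G)$ the automorphism group. The Graovac-Pisanski index is $$\mathrm{GP}(G)=\frac{|V(G)|}{2|\mathrm{Aut}(G)|}\sum_{u\in V(G)}\sum_{\alpha\in \mathrm{Aut}(G)} d_G(u,\alpha(u)).$$ A fullerene is a 3-connected 3-regular plane graph in which every face is bounded by a pentagon or a hexagon. *)

(* Defs.v *)
From HB Require Import structures.
From mathcomp Require Import all_boot all_order all_algebra all_fingroup.
Set Implicit Arguments. Unset Strict Implicit. Unset Printing Implicit Defensive.
Import Order.TTheory GRing.Theory Num.Theory.

Definition simple_graph (V : finType) (e : rel V) : Prop :=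
  symmetric e /\ irreflexive e.

Definition walk_n (V : finType) (e : rel V) (n : nat) (u v : V) : bool :=
  [exists p : n.-tuple V, path e u p && (last u p == v)].

(* shortest-path distance (correct for connected graphs: shortest
   paths have length < #|V|) *)
Definition dist (V : finType) (e : rel V) (u v : V) : nat :=
  find (fun n => walk_n e n u v) (iota 0 #|V|).

Definition connected (V : finType) (e : rel V) : Prop :=
  forall u v : V, connect e u v.

Definition is_aut (V : finType) (e : rel V) (s : {perm V}) : bool :=
  [forall x, forall y, e (s x) (s y) == e x y].

Definition Aut (V : finType) (e : rel V) : {set {perm V}} :=
  [set s | is_aut e s].

Definition GP (V : finType) (e : rel V) : rat :=
  ((#|V|)%:R / (2 * #|Aut e|)%:R) *
  (\sum_(u : V) \sum_(a in Aut e) dist e u (a u))%:R.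

Definition k_connected (V : finType) (e : rel V) (k : nat) : Prop :=
  k < #|V| /\
  forall S : {set V}, #|S| < k ->
    forall x y, x \notin S -> y \notin S ->
      connect [rel a b | [&& e a b, a \notin S & b \notin S]] x y.

Definition cubic (V : finType) (e : rel V) : Prop :=
  forall v : V, #|[set w | e v w]| = 3.

Definition dart (V : finType) (e : rel V) : finType :=
  {d : V * V | e d.1 d.2 && e d.2 d.1}.

Lemma dart_rev_proof (V : finType) (e : rel V) (d : dart e) :
  e (val d).2 (val d).1 && e (val d).1 (val d).2.
Proof. by case: d => [[a b]] /= /andP[-> ->]. Qed.

Definition dart_rev (V : finType) (e : rel V) (d : dart e) : dart e :=
  exist _ ((val d).2, (val d).1) (dart_rev_proof d).

Lemma dart_revK (V : finType) (e : rel V) : involutive (@dart_rev V e).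
Proof. by case=> [[a b] p]; apply: val_inj. Qed.

Definition rev_perm (V : finType) (e : rel V) : {perm dart e} :=
  perm (inv_inj (@dart_revK V e)).

(* Face permutation of a rotation system rho: d |-> rho (rev d). *)
Definition face_perm (V : finType) (e : rel V) (rho : {perm dart e}) :
  {perm dart e} := (rev_perm e * rho)%g.

Definition rotation_system (V : finType) (e : rel V) (rho : {perm dart e}) :
  Prop :=
  forall d : dart e, porbit rho d = [set d' | (val d').1 == (val d).1].

(* Plane embedding (combinatorial map of genus 0): a rotation system
   satisfying Euler's formula V - E + F = 2, with #darts = 2E. *)
Definition spherical (V : finType) (e : rel V) (rho : {perm dart e}) : Prop :=
  rotation_system rho /\
  (2 * #|V| + 2 * #|porbits (face_perm rho)| = #|dart e| + 4)%N.

Definition fullerene (V : finType) (e : rel V) : Prop :=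
  simple_graph e /\ k_connected e 3 /\ cubic e /\
  exists rho : {perm dart e}, spherical rho /\
    forall d : dart e, #|porbit (face_perm rho) d| \in [:: 5; 6]%N.

(* Main.v *)
Require Import Defs.
From HB Require Import structures.
From mathcomp Require Import all_boot all_order all_algebra all_fingroup.
From mathcomp Require Import ring.
Set Implicit Arguments. Unset Strict Implicit. Unset Printing Implicit Defensive.
Import GroupScope.

Section S.
Variables (V : finType) (e : rel V).

Lemma is_autP (s : {perm V}) : reflect (forall x y, e (s x) (s y) = e x y) (is_aut e s).
Proof.
apply: (iffP forallP) => [H x y|H x]; first by apply/eqP; move/forallP: (H x).
by apply/forallP => y; rewrite H.
Qed.

Lemma Aut_group_set : group_set (Defs.Aut e).
Proof.
apply/group_setP; split; first by rewrite inE; apply/is_autP => x y; rewrite !perm1.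
move=> a b; rewrite !inE => /is_autP Ha /is_autP Hb; apply/is_autP => x y.
by rewrite !permM Hb Ha.
Qed.

Canonical Aut_group := group Aut_group_set.

Lemma walk_aut (a : {perm V}) n u v : a \in Defs.Aut e ->
  walk_n e n u v -> walk_n e n (a u) (a v).
Proof.
rewrite inE => /is_autP Ha /existsP[p /andP[Hp /eqP Hl]].
apply/existsP; exists (map_tuple a p) => /=.
rewrite path_map last_map Hl eqxx andbT.
by rewrite (eq_path (e' := e)) // => x y /=; rewrite Ha.
Qed.

Lemma dist_aut (a : {perm V}) u v : a \in Defs.Aut e -> dist e (a u) (a v) = dist e u v.
Proof.
move=> Aa; rewrite /dist; apply: eq_find => n /=.
apply/idP/idP; last exact: walk_aut.
move=> H; have Ai : a^-1 \in Defs.Aut e by rewrite (groupV (Aut_group)).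
by have := walk_aut Ai H; rewrite !permK.
Qed.

Let A := Aut_group.
Definition F u := (\sum_(a in Defs.Aut e) dist e u (a u))%N.

Lemma F_stab u : F u = (#|'C_A[u | 'P]| * \sum_(v in orbit 'P A u) dist e u v)%N.
Proof.
rewrite /F (partition_big (fun a : {perm V} => a u) (mem (orbit 'P A u))); last first.
  by move=> a Aa; apply: (mem_orbit 'P u Aa).
rewrite big_distrr /=; apply: eq_bigr => v Ov.
transitivity (\sum_(a in amove 'P A u v) dist e u v)%N.
  apply: eq_big => a; first by rewrite /amove inE.
  by case/andP => _ /eqP ->.
rewrite sum_nat_const; congr (_ * _)%N.
case/orbitP: Ov => b Ab <-; rewrite (@amove_act _ _ _ ('P) A u (subsetT _) b) ?card_rcoset //.
Qed.

Lemma F_orbit u b : b \in A -> F (b u) = F u.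
Proof.
move=> Ab; rewrite /F (reindex (fun c => b^-1 * c * b)); last first.
  exists (fun c => b * c * b^-1) => c _; by rewrite !mulgA ?mulVg ?mulgV ?mul1g -?mulgA ?mulgV ?mulVg ?mulg1.
apply: eq_big => c.
  rewrite -[Defs.Aut e]/(gval A) /=.
  by rewrite groupMr ?groupMl ?groupV.
move=> _; rewrite !permM permK.
have Ab' : b \in Defs.Aut e by [].
by rewrite (dist_aut _ _ Ab').
Qed.

Definition r (u : V) : V := odflt u [pick v in orbit 'P A u].

Lemma r_orbit u : r u \in orbit 'P A u.
Proof. rewrite /r; case: pickP => [v //|/(_ u)]; by rewrite orbit_refl. Qed.

Lemma r_eq u v : orbit 'P A u = orbit 'P A v -> r u = r v.
Proof.
move=> E; rewrite /r E; case: pickP => [//|/(_ v)]; by rewrite orbit_refl.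
Qed.

Lemma orbit_r u : orbit 'P A (r u) = orbit 'P A u.
Proof. by apply/orbit_eqP; apply: r_orbit. Qed.

Lemma F_r u : F (r u) = F u.
Proof. by case/orbitP: (r_orbit u) => b Ab <-; apply: F_orbit. Qed.

Lemma orbit_card_F w : (#|orbit 'P A w| * F w)%N = (#|A| * \sum_(v in orbit 'P A w) dist e w v)%N.
Proof. by rewrite F_stab mulnA card_orbit_stab. Qed.

Lemma A_dvd_S : #|A| %| \sum_u F u.
Proof.
rewrite (eq_bigr (fun u => F (r u))); last by move=> u _; rewrite F_r.
rewrite (partition_big r predT) //=.
apply: dvdn_sum => w _.
rewrite (eq_bigr (fun _ => F w)); last by move=> u; rewrite ?andTb => /eqP ->.
rewrite sum_nat_const.
have [u0 Hu0|Hn] := pickP [pred u | r u == w]; last first.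
  by rewrite (eq_card0 (A := [pred u | true && (r u == w)])) ?mul0n // => u; rewrite /= Hn.
have Ow : orbit 'P A w = orbit 'P A u0 by move/eqP: Hu0 => <-; rewrite orbit_r.
rewrite (eq_card (B := orbit 'P A w)); first by rewrite orbit_card_F dvdn_mulr.
move=> u; rewrite [in LHS]unfold_in /= -[Defs.Aut e]/(gval A); apply/eqP/idP => [<-|Hu].
  by rewrite orbit_sym r_orbit.
have : orbit 'P A u = orbit 'P A u0 by rewrite -Ow; apply/orbit_eqP.
by move/r_eq => ->; apply/eqP.
Qed.
End S.

Lemma card_dart (V : finType) (e : rel V) : symmetric e -> cubic e ->
  #|dart e| = (3 * #|V|)%N.
Proof.
move=> se cu.
rewrite /dart card_sig -sum1_card.
rewrite -(pair_big_dep xpredT (fun x y => e x y && e y x) (fun _ _ => 1%N)) /=.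
rewrite (eq_bigr (fun _ => 3%N)); first by rewrite sum_nat_const mulnC cardT. move=> x _.
rewrite -(cu x) -sum1_card; apply: eq_bigl => y; by rewrite inE (se y x) andbb.
Qed.

Lemma fullerene_even (V : finType) (e : rel V) : fullerene e -> ~~ odd #|V|.
Proof.
case=> [[se _] [_ [cu [rho [[_ H] _]]]]].
have : ~~ odd (2 * #|V| + 2 * #|porbits (face_perm rho)|)%N.
  by rewrite oddD !oddM.
rewrite H card_dart // oddD oddM /= addbF.
by [].
Qed.

Import GRing.Theory Num.Theory.

Theorem proposition3p5 (V : finType) (e : rel V) :
  fullerene e -> exists z : int, GP e = (z%:~R)%R.
Proof.
move=> fe.
have ev := fullerene_even fe.
have HV : #|V| = (2 * #|V|./2)%N.
  by rewrite -{1}(odd_double_half #|V|) (negbTE ev) add0n -mul2n.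
have [k Hk] := dvdnP (A_dvd_S e).
have Apos : (0 < #|Aut_group e|)%N := cardG_gt0 _.
exists (Posz (#|V|./2 * k)%N).
rewrite -[X in _ = X]/(((#|V|./2 * k)%N%:R : rat)%R).
rewrite /GP.
have -> : (\sum_(u : V) \sum_(a in Defs.Aut e) dist e u (a u))%N = (k * #|Aut_group e|)%N by rewrite -Hk.
rewrite {1}HV.
have : ((#|Aut_group e|%:R : rat) != 0)%R by rewrite pnatr_eq0 -lt0n.
rewrite -[#|Aut_group e|]/#|Defs.Aut e|.
move: (#|Defs.Aut e|) => n nz.
rewrite !natrM; field. by rewrite nz.
Qed.
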